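(* Let $\Omega=[0,1]$, let $p_1,\dots,p_n\in(0,1)$ be distinct, and let $F_\infty$ be the pointwise minimal $\Omega$-tropical series that is non-smooth at each of $p_1,\dots,p_n$. Let $q\in[0,1)$ be the fractional part of $-\sum_{j=1}^n p_j$. Let $H_\infty$ be the set of non-smooth points of $F_\infty$ and $\mu_\infty$ their multiplicities. Then: (i) if $q=0$, then $H_\infty=\{p_1,\dots,p_n\}$ and all multiplicities equal $1$; (ii) if $q=p_j$ for some $j\in\{1,\dots,n\}$, then $H_\infty=\{p_1,\dots,p_n\}$, $\mu_\infty(p_j)=2$, and all other multiplicities equal $1$; (iii) otherwise, $H_\infty=\{q,p_1,\dots,p_n\}$ and all multiplicities equal $1$.
   Context: Let $\Omega=[\alpha,\beta]$ be a compact interval. An $\Omega$-tropical series is a function $F:\Omega\to[0,\infty)$ with $F(\alpha)=F(\beta)=0$ that can be written as $F(z)=\inf_{v\in\mathbb{Z}}(a_v+zv)$ for some real numbers $a_v$. Such $F$ is concave piecewise linear with integer slopes; its non-smooth points are the points of $(\alpha,\beta)$ where $F$ is not differentiable, and the multiplicity of such a point $h$ is $F'(h^-)-F'(h^+)\in\mathbb{Z}_{\ge1}$. For points $p_1,\dots,p_n$ in $(\alpha,\beta)$, the pointwise infimum of all $\Omega$-tropical series that are non-smooth at each $p_i$ is itself an $\Omega$-tropical series non-smooth at each $p_i$; it is denoted $F_\infty=G_{\{p_1,\dots,p_n\}}0_\Omega$. *)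

(* Defs.v *)
From Stdlib Require Import Reals ZArith Lra.
From Coquelicot Require Import Coquelicot.
Open Scope R_scope.

(* An Omega-tropical series on [alpha, beta]: nonnegative on Omega, vanishing at
   the endpoints, and equal on Omega to inf_{v in Z} (a_v + z v) for some real a_v
   (the infimum being a real greatest lower bound). *)
Definition is_trop_series (alpha beta : R) (F : R -> R) : Prop :=
  (forall z, alpha <= z <= beta -> 0 <= F z) /\
  F alpha = 0 /\ F beta = 0 /\
  exists a : Z -> R, forall z, alpha <= z <= beta ->
    (forall v : Z, F z <= a v + z * IZR v) /\
    (forall m, (forall v : Z, m <= a v + z * IZR v) -> m <= F z).

Definition non_smooth (alpha beta : R) (F : R -> R) (h : R) : Prop :=
  alpha < h < beta /\ ~ ex_derive F h.

Definition is_left_deriv (F : R -> R) (h l : R) : Prop :=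
  filterlim (fun t => (F (h + t) - F h) / t) (at_left 0) (locally l).
Definition is_right_deriv (F : R -> R) (h l : R) : Prop :=
  filterlim (fun t => (F (h + t) - F h) / t) (at_right 0) (locally l).

Definition has_mult (F : R -> R) (h : R) (m : Z) : Prop :=
  exists dl dr, is_left_deriv F h dl /\ is_right_deriv F h dr /\ dl - dr = IZR m.

Fixpoint psum (p : nat -> R) (n : nat) : R :=
  match n with O => 0 | S k => psum p k + p k end.

(* Main.v *)
Require Import Defs.
From Stdlib Require Import Reals ZArith Lra Lia Classical List.
From Coquelicot Require Import Coquelicot.
Open Scope R_scope.

Definition hinge (c x : R) := Rmax 0 (x - c).
Fixpoint Hs (p : nat -> R) (n : nat) (x : R) : R :=
  match n with O => 0 | S k => Hs p k x + hinge (p k) x end.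
Fixpoint clt (p : nat -> R) (n : nat) (x : R) : nat :=
  match n with O => O | S k => (clt p k x + if Rlt_dec (p k) x then 1 else 0)%nat end.
Fixpoint ceq (p : nat -> R) (n : nat) (x : R) : nat :=
  match n with O => O | S k => (ceq p k x + if Req_EM_T (p k) x then 1 else 0)%nat end.
Fixpoint cgt (p : nat -> R) (n : nat) (x : R) : nat :=
  match n with O => O | S k => (cgt p k x + if Rlt_dec x (p k) then 1 else 0)%nat end.

Definition supp (G : R -> R) (x s : R) := forall y, 0 <= y <= 1 -> G y <= G x + s * (y - x).

Lemma hinge_nonneg c x : 0 <= hinge c x.
Proof. unfold hinge; apply Rmax_l. Qed.

Lemma hinge_le c x : x <= c -> hinge c x = 0.
Proof. intro; unfold hinge; rewrite Rmax_left; lra. Qed.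

Lemma hinge_ge c x : c <= x -> hinge c x = x - c.
Proof. intro; unfold hinge; rewrite Rmax_right; lra. Qed.

Lemma Hs_nonneg p n x : 0 <= Hs p n x.
Proof. induction n; simpl; [lra|]. pose proof (hinge_nonneg (p n) x); lra. Qed.

Lemma cnt_sum p n x : (clt p n x + ceq p n x + cgt p n x = n)%nat.
Proof.
  induction n; simpl; auto.
  destruct (Rlt_dec (p n) x); destruct (Req_EM_T (p n) x); destruct (Rlt_dec x (p n));
   try lra; lia.
Qed.

Lemma ceq_0 p n x : (forall i, (i < n)%nat -> p i <> x) -> ceq p n x = O.
Proof.
  induction n; simpl; intros H; auto.
  rewrite IHn by (intros; apply H; lia).
  destruct (Req_EM_T (p n) x); auto. exfalso; apply (H n); auto.
Qed.

Lemma ceq_1 p n j : (forall i k, (i < n)%nat -> (k < n)%nat -> p i = p k -> i = k) ->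
  (j < n)%nat -> ceq p n (p j) = 1%nat.
Proof.
  intros hd hj.
  assert (forall m, (m <= n)%nat -> ceq p m (p j) = if lt_dec j m then 1%nat else 0%nat).
  { induction m; intros hm; simpl; auto.
    rewrite IHm by lia.
    destruct (Req_EM_T (p m) (p j)) as [e|e].
    - assert (m = j) by (apply hd; auto; lia). subst.
      repeat destruct (lt_dec _ _); lia.
    - destruct (lt_dec j m); destruct (lt_dec j (S m)); try lia.
      assert (j = m) by lia. subst; tauto. }
  rewrite H by lia. destruct (lt_dec j n); lia.
Qed.

Lemma max_below p n z : (1 <= clt p n z)%nat ->
  exists j, (j < n)%nat /\ p j < z /\ forall i, (i < n)%nat -> p i < z -> p i <= p j.
Proof.
  induction n; simpl; intros H; [lia|].
  destruct (Rlt_dec (p n) z) as [l|l].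
  - destruct (Nat.eq_dec (clt p n z) 0) as [e|e].
    + exists n. split; [lia|split; auto]. intros i hi hz.
      destruct (Nat.eq_dec i n); [subst; lra|].
      exfalso. clear IHn H.
      assert (forall m, (m <= n)%nat -> (i < m)%nat -> (1 <= clt p m z)%nat).
      { induction m; intros; [lia|]. simpl.
        destruct (Nat.eq_dec i m); [subst; destruct (Rlt_dec _ z); [lia|lra]|].
        specialize (IHm ltac:(lia) ltac:(lia)); lia. }
      specialize (H n ltac:(lia) ltac:(lia)). lia.
    + destruct IHn as [j [hj [hz hm]]]; [lia|].
      destruct (Rle_dec (p n) (p j)).
      * exists j; split; [lia|split; auto]. intros i hi hi'.
        destruct (Nat.eq_dec i n); [subst; lra|]. apply hm; auto; lia.
      * exists n; split; [lia|split; auto]. intros i hi hi'.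
        destruct (Nat.eq_dec i n); [subst; lra|].
        pose proof (hm i ltac:(lia) hi'); lra.
  - destruct IHn as [j [hj [hz hm]]]; [lia|].
    exists j; split; [lia|split; auto]. intros i hi hi'.
    destruct (Nat.eq_dec i n); [subst; lra|]. apply hm; auto; lia.
Qed.

Lemma clt_step p n j z : (forall i k, (i < n)%nat -> (k < n)%nat -> p i = p k -> i = k) ->
  (j < n)%nat -> p j < z -> (forall i, (i < n)%nat -> p i < z -> p i <= p j) ->
  clt p n z = S (clt p n (p j)).
Proof.
  intros hd hj hz hm.
  assert (forall m, (m <= n)%nat -> clt p m z = (clt p m (p j) + if lt_dec j m then 1 else 0)%nat).
  { induction m; intros hmn; simpl; auto.
    rewrite IHm by lia.
    destruct (Nat.eq_dec m j).
    - subst. destruct (Rlt_dec (p j) z); destruct (Rlt_dec (p j) (p j)); try lra.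
      destruct (lt_dec j j); destruct (lt_dec j (S j)); lia.
    - destruct (Rlt_dec (p m) z) as [a|a]; destruct (Rlt_dec (p m) (p j)) as [b|b].
      + destruct (lt_dec j m); destruct (lt_dec j (S m)); lia.
      + exfalso. pose proof (hm m ltac:(lia) a).
        assert (p m <> p j) by (intro e; apply n0; apply hd; auto; lia). lra.
      + lra.
      + destruct (lt_dec j m); destruct (lt_dec j (S m)); lia. }
  rewrite H by lia. destruct (lt_dec j n); lia.
Qed.

Lemma Hs_diff p n y z : y < z -> (forall i, (i < n)%nat -> p i < z -> p i <= y) ->
  Hs p n z - Hs p n y = INR (clt p n z) * (z - y).
Proof.
  intros hyz; induction n; simpl; intros hm; [lra|].
  rewrite plus_INR. pose proof (IHn ltac:(intros; apply hm; auto; lia)) as IH.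
  destruct (Rlt_dec (p n) z) as [a|a].
  - pose proof (hm n ltac:(lia) a).
    rewrite (hinge_ge _ z) by lra. rewrite (hinge_ge _ y) by lra. simpl; lra.
  - rewrite (hinge_le _ z) by lra. rewrite (hinge_le _ y) by lra. simpl; lra.
Qed.

Lemma chain G a b al be : 0 <= a -> a < b -> b <= 1 -> supp G a al -> supp G b be -> be <= al.
Proof.
  intros h0 hab h1 sa sb.
  pose proof (sa b ltac:(lra)). pose proof (sb a ltac:(lra)).
  destruct (Rle_dec be al); auto. exfalso.
  assert ((be - al) * (b - a) > 0) by (apply Rmult_gt_0_compat; lra). nra.
Qed.

Lemma LowL (G : R -> R) (n : nat) (p : nat -> R)
  (hp : forall i, (i < n)%nat -> 0 < p i < 1)
  (hd : forall i k, (i < n)%nat -> (k < n)%nat -> p i = p k -> i = k)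
  (G0 : G 0 = 0)
  (hk : forall i, (i < n)%nat -> exists u w : Z, (w + 1 <= u)%Z /\
          supp G (p i) (IZR u) /\ supp G (p i) (IZR w)) :
  forall k z b, 0 < z < 1 -> supp G z (IZR b) -> (clt p n z <= k)%nat ->
    (IZR b + INR (clt p n z)) * z <= G z + Hs p n z.
Proof.
  induction k; intros z b hz sb hc.
  - assert (clt p n z = O) by lia. rewrite H; simpl.
    pose proof (sb 0 ltac:(lra)). pose proof (Hs_nonneg p n z). lra.
  - destruct (Nat.eq_dec (clt p n z) 0) as [e|e].
    + rewrite e; simpl.
      pose proof (sb 0 ltac:(lra)). pose proof (Hs_nonneg p n z). lra.
    + destruct (max_below p n z ltac:(lia)) as [j [hj [hjz hm]]].
      pose proof (clt_step p n j z hd hj hjz hm) as cs.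
      destruct (hk j hj) as [u [w [huw [su sw]]]].
      pose proof (hp j hj).
      assert (IZR b <= IZR w) by (apply (chain G (p j) z); auto; lra).
      assert (IZR w + 1 <= IZR u) by (rewrite <- plus_IZR; apply IZR_le; lia).
      pose proof (IHk (p j) u ltac:(lra) su ltac:(lia)) as IH.
      pose proof (Hs_diff p n (p j) z hjz hm) as hd2.
      pose proof (sb (p j) ltac:(lra)).
      rewrite cs in hd2 |- *. rewrite S_INR in hd2 |- *.
      set (N := INR (clt p n (p j))) in *.
      assert ((IZR b + N + 1) * p j <= (IZR u + N) * p j)
        by (apply Rmult_le_compat_r; lra).
      nra.
Qed.

Lemma supp_refl G x s : supp G x s -> supp (fun y => G (1 - y)) (1 - x) (- s).
Proof.
  intros H y hy. specialize (H (1 - y) ltac:(lra)).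
  replace (1 - (1 - x)) with x by ring. lra.
Qed.

Lemma clt_refl p n z : clt (fun i => 1 - p i) n (1 - z) = cgt p n z.
Proof.
  induction n; simpl; auto. rewrite IHn.
  destruct (Rlt_dec (1 - p n) (1 - z)); destruct (Rlt_dec z (p n)); try lra; auto.
Qed.

Lemma Hs_refl p n z : Hs (fun i => 1 - p i) n (1 - z) = Hs p n z + psum p n - INR n * z.
Proof.
  induction n; simpl; [lra|]. rewrite IHn.
  destruct (Rle_dec (p n) z).
  - rewrite (hinge_ge (p n) z) by lra. rewrite (hinge_le (1 - p n) (1 - z)) by lra.
    destruct n; simpl; lra.
  - rewrite (hinge_le (p n) z) by lra. rewrite (hinge_ge (1 - p n) (1 - z)) by lra.
    destruct n; simpl; lra.
Qed.

Lemma Hs_one p n : (forall i, (i < n)%nat -> 0 < p i < 1) -> Hs p n 1 = INR n - psum p n.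
Proof.
  induction n; simpl; intros H; [lra|]. rewrite IHn by (intros; apply H; lia).
  pose proof (H n ltac:(lia)). rewrite hinge_ge by lra. destruct n; simpl; lra.
Qed.

Lemma Hs_zero p n : (forall i, (i < n)%nat -> 0 < p i < 1) -> Hs p n 0 = 0.
Proof.
  induction n; simpl; intros H; [lra|]. rewrite IHn by (intros; apply H; lia).
  pose proof (H n ltac:(lia)). rewrite hinge_le by lra. lra.
Qed.

Lemma LowR (G : R -> R) (n : nat) (p : nat -> R)
  (hp : forall i, (i < n)%nat -> 0 < p i < 1)
  (hd : forall i k, (i < n)%nat -> (k < n)%nat -> p i = p k -> i = k)
  (G1 : G 1 = 0)
  (hk : forall i, (i < n)%nat -> exists u w : Z, (w + 1 <= u)%Z /\
          supp G (p i) (IZR u) /\ supp G (p i) (IZR w)) :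
  forall z b, 0 < z < 1 -> supp G z (IZR b) ->
    (INR n - psum p n) - (IZR b + INR (clt p n z + ceq p n z)) * (1 - z) <= G z + Hs p n z.
Proof.
  intros z b hz sb.
  pose proof (LowL (fun y => G (1 - y)) n (fun i => 1 - p i)) as C.
  assert (forall i, (i < n)%nat -> 0 < 1 - p i < 1) as hp'.
  { intros i hi; pose proof (hp i hi); lra. }
  assert (forall i k, (i < n)%nat -> (k < n)%nat -> 1 - p i = 1 - p k -> i = k) as hd'.
  { intros i k hi hk' e; apply hd; auto; lra. }
  assert (G (1 - 0) = 0) as G0 by (replace (1 - 0) with 1 by ring; auto).
  assert (forall i, (i < n)%nat -> exists u w : Z, (w + 1 <= u)%Z /\
          supp (fun y => G (1 - y)) (1 - p i) (IZR u) /\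
          supp (fun y => G (1 - y)) (1 - p i) (IZR w)) as hk'.
  { intros i hi. destruct (hk i hi) as [u [w [h1 [h2 h3]]]].
    exists (- w)%Z, (- u)%Z. split; [lia|].
    rewrite !opp_IZR. split; apply supp_refl; auto. }
  specialize (C hp' hd' G0 hk' (clt (fun i => 1 - p i) n (1 - z)) (1 - z) (- b)%Z
     ltac:(lra)).
  rewrite opp_IZR in C.
  specialize (C (supp_refl G z (IZR b) sb) (le_n _)).
  rewrite clt_refl, Hs_refl in C. replace (1 - (1 - z)) with z in C by ring.
  pose proof (cnt_sum p n z) as cs.
  assert (INR n = INR (clt p n z) + INR (ceq p n z) + INR (cgt p n z)) as e.
  { rewrite <- !plus_INR, cs; auto. }
  rewrite plus_INR. rewrite e in C |- *. nra.
Qed.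

Lemma LB (G : R -> R) (n : nat) (p : nat -> R) (m : Z) (q : R)
  (hp : forall i, (i < n)%nat -> 0 < p i < 1)
  (hd : forall i k, (i < n)%nat -> (k < n)%nat -> p i = p k -> i = k)
  (G0 : G 0 = 0) (G1 : G 1 = 0)
  (hk : forall i, (i < n)%nat -> exists u w : Z, (w + 1 <= u)%Z /\
          supp G (p i) (IZR u) /\ supp G (p i) (IZR w))
  (hs : forall z, 0 < z < 1 -> exists v : Z, supp G z (IZR v))
  (hm : IZR m + q = INR n - psum p n) (hq : 0 <= q < 1) :
  forall z, 0 <= z <= 1 -> IZR (m + 1) * z - hinge q z - Hs p n z <= G z.
Proof.
  intros z hz.
  destruct (Req_dec z 0) as [e|e].
  { subst. rewrite G0. pose proof (hinge_nonneg q 0). pose proof (Hs_nonneg p n 0). lra. }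
  destruct (Req_dec z 1) as [e1|e1].
  { subst. rewrite G1, Hs_one by auto. rewrite hinge_ge by lra. rewrite plus_IZR. lra. }
  assert (0 < z < 1) as hz' by lra.
  assert (exists al be : Z, supp G z (IZR al) /\ supp G z (IZR be) /\
            IZR be + INR (ceq p n z) <= IZR al) as [al [be [sa [sb hab]]]].
  { destruct (classic (exists j, (j < n)%nat /\ p j = z)) as [[j [hj ej]]|nj].
    - subst z. rewrite (ceq_1 p n j hd hj).
      destruct (hk j hj) as [u [w [h1 [h2 h3]]]]. exists u, w. split; auto. split; auto.
      simpl. rewrite <- plus_IZR. apply IZR_le. lia.
    - rewrite ceq_0 by (intros i hi e'; apply nj; eauto).
      destruct (hs z hz') as [v hv]. exists v, v. simpl. split; auto. split; auto. lra. }
  pose proof (LowL G n p hp hd G0 hk _ z al hz' sa (le_n _)) as c1.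
  pose proof (LowR G n p hp hd G1 hk z be hz' sb) as c2.
  rewrite plus_INR in c2.
  set (N := clt p n z) in *.
  assert (IZR (al + Z.of_nat N) = IZR al + INR N) as ev.
  { rewrite plus_IZR, <- INR_IZR_INZ. auto. }
  pose proof (hinge_nonneg q z).
  destruct (Z_le_gt_dec (m + 1) (al + Z.of_nat N)) as [c|c].
  - apply IZR_le in c. rewrite ev in c.
    assert (IZR (m + 1) * z <= (IZR al + INR N) * z) by (apply Rmult_le_compat_r; lra).
    lra.
  - assert (al + Z.of_nat N <= m)%Z as c' by lia. apply IZR_le in c'. rewrite ev in c'.
    assert (hinge q z >= z - q) by (unfold hinge; pose proof (Rmax_r 0 (z - q)); lra).
    rewrite plus_IZR.
    assert ((IZR be + INR N + INR (ceq p n z)) * (1 - z) <= IZR m * (1 - z))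
      by (apply Rmult_le_compat_r; lra).
    lra.
Qed.

Lemma fin_gap (f : Z -> R) (c : R) (P : Z -> Prop) (lo : Z) (k : nat) :
 (forall v, (lo <= v <= lo + Z.of_nat k)%Z -> P v -> c < f v) ->
 exists eps, 0 < eps /\ forall v, (lo <= v <= lo + Z.of_nat k)%Z -> P v -> c + eps <= f v.
Proof.
  induction k; intros H.
  - destruct (classic (P lo)) as [pl|pl].
    + exists (f lo - c). pose proof (H lo ltac:(lia) pl). split; [lra|].
      intros v hv pv. assert (v = lo) by lia. subst. lra.
    + exists 1. split; [lra|]. intros v hv pv. assert (v = lo) by lia. subst. tauto.
  - destruct IHk as [e [he Hk]].
    { intros v hv pv. apply H; auto; lia. }
    set (w := (lo + Z.of_nat (S k))%Z).
    destruct (classic (P w)) as [pl|pl].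
    + pose proof (H w ltac:(unfold w; lia) pl).
      exists (Rmin e (f w - c)). split; [apply Rmin_pos; lra|].
      intros v hv pv. destruct (Z.eq_dec v w).
      * subst. pose proof (Rmin_r e (f w - c)). lra.
      * pose proof (Hk v ltac:(unfold w in *; lia) pv). pose proof (Rmin_l e (f w - c)). lra.
    + exists e. split; auto. intros v hv pv. destruct (Z.eq_dec v w).
      * subst; tauto.
      * apply Hk; auto. unfold w in *; lia.
Qed.

Lemma fin_gap2 (f : Z -> R) (c : R) (P : Z -> Prop) (lo hi : Z) :
 (forall v, (lo <= v <= hi)%Z -> P v -> c < f v) ->
 exists eps, 0 < eps /\ forall v, (lo <= v <= hi)%Z -> P v -> c + eps <= f v.
Proof.
  intros H. destruct (Z_le_gt_dec lo hi).
  - destruct (fin_gap f c P lo (Z.to_nat (hi - lo))) as [e [he He]].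
    { intros v hv pv. apply H; auto. lia. }
    exists e; split; auto. intros v hv pv; apply He; auto; lia.
  - exists 1; split; [lra|]. intros; lia.
Qed.

Definition trop_rep (G : R -> R) (a : Z -> R) :=
  forall z, 0 <= z <= 1 ->
    (forall v : Z, G z <= a v + z * IZR v) /\
    (forall m, (forall v : Z, m <= a v + z * IZR v) -> m <= G z).

Lemma a_nonneg G a : trop_rep G a -> G 0 = 0 -> forall v, 0 <= a v.
Proof. intros ha G0 v. destruct (ha 0 ltac:(lra)) as [h _]. specialize (h v). lra. Qed.

Lemma a_one G a : trop_rep G a -> G 1 = 0 -> forall v, 0 <= a v + IZR v.
Proof. intros ha G1 v. destruct (ha 1 ltac:(lra)) as [h _]. specialize (h v). lra. Qed.

Lemma attain G a : trop_rep G a -> G 0 = 0 -> G 1 = 0 ->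
  forall z, 0 < z < 1 -> exists v, G z = a v + z * IZR v.
Proof.
  intros ha G0 G1 z hz. apply NNPP. intros nv.
  destruct (ha z ltac:(lra)) as [hle hglb].
  assert (forall v, G z < a v + z * IZR v) as hlt.
  { intros v. destruct (Rle_lt_or_eq_dec _ _ (hle v)); auto. exfalso; apply nv; eauto. }
  set (r1 := (G z + 1) / z). set (r2 := (G z + 1) / (1 - z)).
  destruct (fin_gap2 (fun v => a v + z * IZR v) (G z) (fun _ => True) (- up r2) (up r1))
    as [e [he He]].
  { intros; apply hlt. }
  assert (G z + Rmin e 1 <= G z) as contra.
  { apply hglb. intros v.
    pose proof (Rmin_l e 1). pose proof (Rmin_r e 1).
    destruct (Z_le_gt_dec v (up r1)) as [c1|c1].
    - destruct (Z_le_gt_dec (- up r2) v) as [c2|c2].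
      + pose proof (He v ltac:(lia) I). simpl in *. lra.
      + assert (v < - up r2)%Z as c2' by lia. apply IZR_lt in c2'. rename c2' into c2x. rewrite opp_IZR in c2x.
        pose proof (archimed r2) as [ar _].
        assert (r2 * (1 - z) = G z + 1) by (unfold r2; field; lra).
        assert (r2 * (1 - z) < - IZR v * (1 - z)) by (apply Rmult_lt_compat_r; lra).
        pose proof (a_one G a ha G1 v). nra.
    - assert (up r1 < v)%Z as c1' by lia. apply IZR_lt in c1'.
      pose proof (archimed r1) as [ar _].
      assert (r1 * z = G z + 1) by (unfold r1; field; lra).
      assert (r1 * z < IZR v * z) by (apply Rmult_lt_compat_r; lra).
      pose proof (a_nonneg G a ha G0 v). nra. }
  pose proof (Rmin_glb_lt e 1 0). assert (0 < Rmin e 1) by (apply Rmin_pos; lra). lra.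
Qed.

Lemma attain_supp G a z v : trop_rep G a -> G z = a v + z * IZR v -> supp G z (IZR v).
Proof. intros ha e y hy. destruct (ha y hy) as [h _]. specialize (h v). lra. Qed.

Lemma kink G a : trop_rep G a -> G 0 = 0 -> G 1 = 0 ->
  forall h, 0 < h < 1 -> ~ ex_derive G h ->
  exists u w : Z, (w + 1 <= u)%Z /\ G h = a u + h * IZR u /\ G h = a w + h * IZR w.
Proof.
  intros ha G0 G1 h hh nd. apply NNPP. intros nk. apply nd.
  destruct (attain G a ha G0 G1 h hh) as [v0 e0].
  assert (forall v, G h = a v + h * IZR v -> v = v0) as uniq.
  { intros v ev. destruct (Z.lt_total v v0) as [l|[l|l]]; auto; exfalso; apply nk.
    - exists v0, v. split; [lia|auto].
    - exists v, v0. split; [lia|auto]. }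
  set (M0 := Rabs (a v0) + Rabs (IZR v0)).
  assert (0 <= M0) by (unfold M0; pose proof (Rabs_pos (a v0)); pose proof (Rabs_pos (IZR v0)); lra).
  set (B := 2 * M0 / h + 2 * M0 / (1 - h)).
  assert (h * (2 * M0 / h) = 2 * M0) as eB1 by (field; lra).
  assert ((1 - h) * (2 * M0 / (1 - h)) = 2 * M0) as eB2 by (field; lra).
  assert (0 <= 2 * M0 / h) by (apply Rmult_le_pos; [lra|left; apply Rinv_0_lt_compat; lra]).
  assert (0 <= 2 * M0 / (1 - h)) by (apply Rmult_le_pos; [lra|left; apply Rinv_0_lt_compat; lra]).
  destruct (fin_gap2 (fun v => a v + h * IZR v) (G h) (fun v => v <> v0) (- up B) (up B))
    as [e [he He]].
  { intros v hv nv. destruct (ha h ltac:(lra)) as [hle _].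
    destruct (Rle_lt_or_eq_dec _ _ (hle v)); auto. exfalso; apply nv; apply uniq; auto. }
  set (K := B + Rabs (IZR v0) + 1).
  assert (0 < K) by (unfold K, B; pose proof (Rabs_pos (IZR v0)); lra).
  assert (0 < e / (2 * K)) by (apply Rdiv_lt_0_compat; lra).
  set (d := Rmin (Rmin (h / 2) ((1 - h) / 2)) (e / (2 * K))).
  assert (0 < d) by (unfold d; repeat apply Rmin_pos; lra).
  exists (IZR v0).
  apply (is_derive_ext_loc (fun y => a v0 + y * IZR v0)).
  2: { auto_derive; auto; ring. }
  exists (mkposreal d H4). intros y hy.
  unfold ball in hy; simpl in hy; unfold AbsRing_ball in hy; simpl in hy.
  change (Rabs (y - h) < d) in hy.
  pose proof (Rmin_l (Rmin (h / 2) ((1 - h) / 2)) (e / (2 * K))).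
  pose proof (Rmin_r (Rmin (h / 2) ((1 - h) / 2)) (e / (2 * K))).
  pose proof (Rmin_l (h / 2) ((1 - h) / 2)). pose proof (Rmin_r (h / 2) ((1 - h) / 2)).
  fold d in H5, H6.
  apply Rabs_def2 in hy. destruct hy as [hy1 hy2].
  assert (0 < y < 1) as hy by lra.
  destruct (attain G a ha G0 G1 y hy) as [v' e'].
  destruct (Z.eq_dec v' v0) as [E|E].
  { subst. lra. }
  exfalso.
  destruct (ha y ltac:(lra)) as [hle _].
  pose proof (hle v0) as h0.
  assert (G y <= M0).
  { unfold M0. pose proof (Rle_abs (a v0)).
    assert (y * IZR v0 <= Rabs (IZR v0)).
    { destruct (Rle_dec 0 (IZR v0)).
      - rewrite Rabs_right by lra.
        assert (y * IZR v0 <= 1 * IZR v0) by (apply Rmult_le_compat_r; lra). lra.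
      - assert (y * IZR v0 < 0) by (apply Rmult_pos_neg; lra).
        pose proof (Rabs_pos (IZR v0)). lra. }
    lra. }
  pose proof (a_nonneg G a ha G0 v'). pose proof (a_one G a ha G1 v').
  assert (0 <= B) as B0 by (unfold B; lra).
  assert (IZR v' <= B).
  { destruct (Rle_dec (IZR v') B); auto. exfalso.
    assert (h / 2 * IZR v' < y * IZR v') by (apply Rmult_lt_compat_r; lra).
    assert (h / 2 * B <= h / 2 * IZR v') by (apply Rmult_le_compat_l; lra).
    unfold B in *. nra. }
  assert (- B <= IZR v').
  { destruct (Rle_dec (- B) (IZR v')); auto. exfalso.
    assert ((1 - h) / 2 * (- IZR v') < (1 - y) * (- IZR v')) by (apply Rmult_lt_compat_r; lra).
    assert ((1 - h) / 2 * B <= (1 - h) / 2 * (- IZR v')) by (apply Rmult_le_compat_l; lra).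
    unfold B in *. nra. }
  pose proof (archimed B) as [ar _].
  assert (- up B <= v' <= up B)%Z as hr.
  { split.
    - apply le_IZR. rewrite opp_IZR. lra.
    - apply le_IZR. lra. }
  pose proof (He v' hr E) as g. simpl in g.
  assert (e <= (h - y) * (IZR v' - IZR v0)) as ge by lra.
  assert (Rabs ((h - y) * (IZR v' - IZR v0)) <= d * K).
  { rewrite Rabs_mult. apply Rmult_le_compat; try apply Rabs_pos.
    - rewrite Rabs_minus_sym. apply Rabs_le. lra.
    - unfold K. pose proof (Rabs_triang (IZR v') (- IZR v0)). rewrite Rabs_Ropp in H14.
      unfold Rminus. assert (Rabs (IZR v') <= B) by (apply Rabs_le; lra). lra. }
  assert (d * K <= e / (2 * K) * K) by (apply Rmult_le_compat_r; lra).
  assert (e / (2 * K) * K = e / 2) by (field; lra).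
  pose proof (Rle_abs ((h - y) * (IZR v' - IZR v0))). lra.
Qed.

Definition F0 (m : Z) (q : R) (p : nat -> R) (n : nat) (z : R) :=
  IZR (m + 1) * z - hinge q z - Hs p n z.

Fixpoint Lines (m : Z) (q : R) (p : nat -> R) (k : nat) : list (Z * R) :=
  match k with
  | O => ((m + 1)%Z, 0) :: (m, q) :: nil
  | S j => Lines m q p j ++ map (fun sc => ((fst sc - 1)%Z, snd sc + p j)) (Lines m q p j)
  end.

Definition lv (sc : Z * R) (z : R) := snd sc + z * IZR (fst sc).

Lemma lines_ok m q p k z :
  (forall sc, In sc (Lines m q p k) -> F0 m q p k z <= lv sc z) /\
  exists sc, In sc (Lines m q p k) /\ lv sc z = F0 m q p k z.
Proof.
  unfold F0. induction k; simpl.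
  - pose proof (hinge_nonneg q z).
    assert (hinge q z >= z - q) by (unfold hinge; pose proof (Rmax_r 0 (z - q)); lra).
    split.
    + intros sc [e|[e|[]]]; subst; unfold lv; simpl; rewrite ?plus_IZR; lra.
    + destruct (Rle_dec z q).
      * exists ((m + 1)%Z, 0). split; [left; auto|]. unfold lv; simpl. rewrite hinge_le by lra. lra.
      * exists (m, q). split; [right; left; auto|]. unfold lv; simpl.
        rewrite hinge_ge by lra. rewrite plus_IZR. lra.
  - destruct IHk as [I1 [sc0 [I2 I3]]].
    pose proof (hinge_nonneg (p k) z).
    assert (hinge (p k) z >= z - p k) by (unfold hinge; pose proof (Rmax_r 0 (z - p k)); lra).
    split.
    + intros sc hin. apply in_app_or in hin. destruct hin as [hin|hin].
      * pose proof (I1 sc hin). lra.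
      * apply in_map_iff in hin. destruct hin as [sc' [e hin]]. subst.
        pose proof (I1 sc' hin). unfold lv in *; simpl. rewrite minus_IZR. lra.
    + destruct (Rle_dec z (p k)).
      * exists sc0. split; [apply in_or_app; left; auto|]. rewrite (hinge_le (p k) z) by lra. lra.
      * exists ((fst sc0 - 1)%Z, snd sc0 + p k). split.
        -- apply in_or_app; right. apply in_map_iff. exists sc0; auto.
        -- unfold lv in *; simpl. rewrite minus_IZR. rewrite (hinge_ge (p k) z) by lra. lra.
Qed.

Lemma lines_top m q p k : In ((m + 1)%Z, 0) (Lines m q p k).
Proof. induction k; simpl; [left; auto|]. apply in_or_app; left; auto. Qed.

Definition afold (L : list (Z * R)) (D : R) (v : Z) : R :=
  fold_right (fun sc acc => if Z.eq_dec (fst sc) v then Rmin (snd sc) acc else acc) D L.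

Lemma afold_ge L D v z X : (forall sc, In sc L -> X <= lv sc z) -> X <= D + z * IZR v ->
  X <= afold L D v + z * IZR v.
Proof.
  induction L as [|sc L IH]; simpl; intros H HD; auto.
  destruct (Z.eq_dec (fst sc) v) as [e|e].
  - unfold Rmin. destruct (Rle_dec (snd sc) (afold L D v)).
    + pose proof (H sc (or_introl eq_refl)). unfold lv in *. rewrite e in H0. lra.
    + apply IH; auto.
  - apply IH; auto.
Qed.

Lemma afold_le L D sc : In sc L -> afold L D (fst sc) <= snd sc.
Proof.
  induction L as [|sc' L IH]; simpl; intros H; [tauto|].
  destruct H as [e|H].
  - subst. destruct (Z.eq_dec (fst sc) (fst sc)); [apply Rmin_l|tauto].
  - destruct (Z.eq_dec (fst sc') (fst sc)).
    + pose proof (IH H). pose proof (Rmin_r (snd sc') (afold L D (fst sc))). lra.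
    + auto.
Qed.

Lemma F0_trop m q p n (hp : forall i, (i < n)%nat -> 0 < p i < 1)
  (hm : IZR m + q = INR n - psum p n) (hq : 0 <= q < 1) :
  is_trop_series 0 1 (F0 m q p n).
Proof.
  assert (F0 m q p n 0 = 0) as e0.
  { unfold F0. rewrite Hs_zero by auto. rewrite hinge_le by lra. lra. }
  assert (F0 m q p n 1 = 0) as e1.
  { unfold F0. rewrite Hs_one by auto. rewrite hinge_ge by lra. rewrite plus_IZR. lra. }
  set (a := fun v => afold (Lines m q p n) (Rabs (IZR (m + 1)) + 1 + Rabs (IZR v)) v).
  assert (forall z, 0 <= z <= 1 ->
    (forall v : Z, F0 m q p n z <= a v + z * IZR v) /\
    (forall mm, (forall v : Z, mm <= a v + z * IZR v) -> mm <= F0 m q p n z)) as rep.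
  { intros z hz. destruct (lines_ok m q p n z) as [I1 [sc [I2 I3]]]. split.
    - intros v. unfold a. apply afold_ge; auto.
      pose proof (I1 _ (lines_top m q p n)). unfold lv in H; simpl in H.
      assert (z * IZR (m + 1) <= Rabs (IZR (m + 1))).
      { destruct (Rle_dec 0 (IZR (m + 1))).
        - rewrite Rabs_right by lra.
          assert (z * IZR (m + 1) <= 1 * IZR (m + 1)) by (apply Rmult_le_compat_r; lra). lra.
        - assert (0 <= z * (- IZR (m + 1))) by (apply Rmult_le_pos; lra).
          pose proof (Rabs_pos (IZR (m + 1))). lra. }
      assert (- Rabs (IZR v) <= z * IZR v).
      { destruct (Rle_dec 0 (IZR v)).
        - assert (0 <= z * IZR v) by (apply Rmult_le_pos; lra). pose proof (Rabs_pos (IZR v)). lra.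
        - rewrite Rabs_left by lra.
          assert (0 <= (1 - z) * (- IZR v)) by (apply Rmult_le_pos; lra). lra. }
      lra.
    - intros mm hmm. specialize (hmm (fst sc)).
      pose proof (afold_le (Lines m q p n) (Rabs (IZR (m + 1)) + 1 + Rabs (IZR (fst sc))) sc I2).
      unfold a in hmm. unfold lv in I3. lra. }
  split; [|split; [auto|split; [auto|exists a; auto]]].
  intros z hz. destruct (lines_ok m q p n z) as [I1 [sc [I2 I3]]].
  pose proof (proj1 (rep 0 ltac:(lra)) (fst sc)). pose proof (proj1 (rep 1 ltac:(lra)) (fst sc)).
  pose proof (afold_le (Lines m q p n) (Rabs (IZR (m + 1)) + 1 + Rabs (IZR (fst sc))) sc I2).
  fold (a (fst sc)) in H1.
  unfold lv in I3. rewrite e0 in H. rewrite e1 in H0.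
  assert (0 <= snd sc) by lra. assert (0 <= snd sc + IZR (fst sc)) by lra.
  replace (F0 m q p n z) with ((1 - z) * snd sc + z * (snd sc + IZR (fst sc))) by (rewrite <- I3; ring).
  apply Rplus_le_le_0_compat; apply Rmult_le_pos; lra.
Qed.

Definition LL (f : R -> R) (h l : R) := exists d, 0 < d /\ forall t, - d < t < 0 -> f (h + t) = f h + l * t.
Definition RL (f : R -> R) (h l : R) := exists d, 0 < d /\ forall t, 0 < t < d -> f (h + t) = f h + l * t.

Lemma LL_hinge c h : LL (hinge c) h (if Rlt_dec c h then 1 else 0).
Proof.
  destruct (Rlt_dec c h).
  - exists (h - c). split; [lra|]. intros t ht. rewrite !hinge_ge by lra. lra.
  - exists 1. split; [lra|]. intros t ht. rewrite !hinge_le by lra. lra.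
Qed.

Lemma RL_hinge c h : RL (hinge c) h (if Rle_dec c h then 1 else 0).
Proof.
  destruct (Rle_dec c h).
  - exists 1. split; [lra|]. intros t ht. rewrite !hinge_ge by lra. lra.
  - exists (c - h). split; [lra|]. intros t ht. rewrite !hinge_le by lra. lra.
Qed.

Lemma LL_lin A h : LL (fun z => A * z) h A.
Proof. exists 1. split; [lra|]. intros; ring. Qed.
Lemma RL_lin A h : RL (fun z => A * z) h A.
Proof. exists 1. split; [lra|]. intros; ring. Qed.

Lemma LL_minus f g h a b : LL f h a -> LL g h b -> LL (fun z => f z - g z) h (a - b).
Proof.
  intros [d1 [h1 H1]] [d2 [h2 H2]]. exists (Rmin d1 d2). split; [apply Rmin_pos; auto|].
  intros t ht. pose proof (Rmin_l d1 d2). pose proof (Rmin_r d1 d2).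
  rewrite H1, H2 by lra. ring.
Qed.
Lemma RL_minus f g h a b : RL f h a -> RL g h b -> RL (fun z => f z - g z) h (a - b).
Proof.
  intros [d1 [h1 H1]] [d2 [h2 H2]]. exists (Rmin d1 d2). split; [apply Rmin_pos; auto|].
  intros t ht. pose proof (Rmin_l d1 d2). pose proof (Rmin_r d1 d2).
  rewrite H1, H2 by lra. ring.
Qed.
Lemma LL_plus f g h a b : LL f h a -> LL g h b -> LL (fun z => f z + g z) h (a + b).
Proof.
  intros [d1 [h1 H1]] [d2 [h2 H2]]. exists (Rmin d1 d2). split; [apply Rmin_pos; auto|].
  intros t ht. pose proof (Rmin_l d1 d2). pose proof (Rmin_r d1 d2).
  rewrite H1, H2 by lra. ring.
Qed.
Lemma RL_plus f g h a b : RL f h a -> RL g h b -> RL (fun z => f z + g z) h (a + b).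
Proof.
  intros [d1 [h1 H1]] [d2 [h2 H2]]. exists (Rmin d1 d2). split; [apply Rmin_pos; auto|].
  intros t ht. pose proof (Rmin_l d1 d2). pose proof (Rmin_r d1 d2).
  rewrite H1, H2 by lra. ring.
Qed.

Lemma LL_ext f g h l : LL f h l -> (forall t, f t = g t) -> LL g h l.
Proof. intros [d [hd H]] e. exists d; split; auto. intros; rewrite <- !e; auto. Qed.
Lemma RL_ext f g h l : RL f h l -> (forall t, f t = g t) -> RL g h l.
Proof. intros [d [hd H]] e. exists d; split; auto. intros; rewrite <- !e; auto. Qed.



Lemma LL_Hs p n h : LL (Hs p n) h (INR (clt p n h)).
Proof.
  induction n; simpl.
  - exists 1; split; [lra|]. intros; ring.
  - rewrite plus_INR.
    replace (INR (if Rlt_dec (p n) h then 1%nat else 0%nat)) with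
      (if Rlt_dec (p n) h then 1 else 0) by (destruct (Rlt_dec (p n) h); simpl; auto).
    apply (LL_plus (Hs p n) (hinge (p n))); auto. apply LL_hinge.
Qed.

Lemma RL_Hs p n h : RL (Hs p n) h (INR (clt p n h + ceq p n h)).
Proof.
  induction n; simpl.
  - exists 1; split; [lra|]. intros; ring.
  - replace (INR (clt p n h + (if Rlt_dec (p n) h then 1 else 0) +
               (ceq p n h + (if Req_EM_T (p n) h then 1 else 0))))
      with (INR (clt p n h + ceq p n h) + if Rle_dec (p n) h then 1 else 0).
    + apply (RL_plus (Hs p n) (hinge (p n))); auto. apply RL_hinge.
    + rewrite !plus_INR.
      destruct (Rle_dec (p n) h); destruct (Rlt_dec (p n) h); destruct (Req_EM_T (p n) h);
        simpl; lra.
Qed.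

Lemma LL_loc f g h l : 0 < h -> (forall t, 0 <= t <= 1 -> f t = g t) -> h < 1 -> LL f h l -> LL g h l.
Proof.
  intros h0 e h1 [d [hd H]]. exists (Rmin d h). split; [apply Rmin_pos; auto|].
  intros t ht. pose proof (Rmin_l d h). pose proof (Rmin_r d h).
  rewrite <- !e by lra. apply H; lra.
Qed.
Lemma RL_loc f g h l : 0 < h -> (forall t, 0 <= t <= 1 -> f t = g t) -> h < 1 -> RL f h l -> RL g h l.
Proof.
  intros h0 e h1 [d [hd H]]. exists (Rmin d (1 - h)). split; [apply Rmin_pos; lra|].
  intros t ht. pose proof (Rmin_l d (1 - h)). pose proof (Rmin_r d (1 - h)).
  rewrite <- !e by lra. apply H; lra.
Qed.

Lemma LL_left f h l : LL f h l -> is_left_deriv f h l.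
Proof.
  intros [d [hd H]]. unfold is_left_deriv.
  apply (filterlim_ext_loc (fun _ => l)).
  2: apply filterlim_const.
  exists (mkposreal d hd). intros y hy hneg.
  unfold ball in hy; simpl in hy; unfold AbsRing_ball in hy; simpl in hy.
  change (Rabs (y - 0) < d) in hy. rewrite Rminus_0_r in hy.
  apply Rabs_def2 in hy. rewrite H by lra. field. lra.
Qed.
Lemma RL_right f h l : RL f h l -> is_right_deriv f h l.
Proof.
  intros [d [hd H]]. unfold is_right_deriv.
  apply (filterlim_ext_loc (fun _ => l)).
  2: apply filterlim_const.
  exists (mkposreal d hd). intros y hy hneg.
  unfold ball in hy; simpl in hy; unfold AbsRing_ball in hy; simpl in hy.
  change (Rabs (y - 0) < d) in hy. rewrite Rminus_0_r in hy.
  apply Rabs_def2 in hy. rewrite H by lra. field. lra.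
Qed.

Lemma LR_nd f h a b : LL f h a -> RL f h b -> a <> b -> ~ ex_derive f h.
Proof.
  intros [d1 [h1 H1]] [d2 [h2 H2]] nab [l hl].
  apply is_derive_Reals in hl.
  assert (0 < Rabs (a - b) / 2) by (apply Rdiv_lt_0_compat; [apply Rabs_pos_lt; lra|lra]).
  destruct (hl _ H) as [del hdel].
  pose proof (cond_pos del).
  set (t1 := - Rmin d1 del / 2). set (t2 := Rmin d2 del / 2).
  pose proof (Rmin_l d1 del). pose proof (Rmin_r d1 del).
  pose proof (Rmin_l d2 del). pose proof (Rmin_r d2 del).
  assert (0 < Rmin d1 del) by (apply Rmin_pos; lra).
  assert (0 < Rmin d2 del) by (apply Rmin_pos; lra).
  pose proof (hdel t1 ltac:(unfold t1; lra) ltac:(unfold t1; rewrite Rabs_left; lra)) as A1.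
  pose proof (hdel t2 ltac:(unfold t2; lra) ltac:(unfold t2; rewrite Rabs_right; lra)) as A2.
  rewrite H1 in A1 by (unfold t1; lra). rewrite H2 in A2 by (unfold t2; lra).
  replace ((f h + a * t1 - f h) / t1) with a in A1 by (field; unfold t1; lra).
  replace ((f h + b * t2 - f h) / t2) with b in A2 by (field; unfold t2; lra).
  pose proof (Rabs_triang (a - l) (l - b)) as TR. replace (a - l + (l - b)) with (a - b) in TR by ring.
  rewrite Rabs_minus_sym in A2. lra.
Qed.

Lemma LR_d f h a : LL f h a -> RL f h a -> ex_derive f h.
Proof.
  intros [d1 [h1 H1]] [d2 [h2 H2]]. exists a. apply is_derive_Reals.
  intros eps heps. assert (0 < Rmin d1 d2) by (apply Rmin_pos; auto).
  exists (mkposreal _ H). simpl. intros t t0 ht.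
  pose proof (Rmin_l d1 d2). pose proof (Rmin_r d1 d2).
  apply Rabs_def2 in ht.
  destruct (Rlt_dec t 0).
  - rewrite H1 by lra. replace ((f h + a * t - f h) / t - a) with 0 by (field; auto).
    rewrite Rabs_R0; auto.
  - rewrite H2 by lra. replace ((f h + a * t - f h) / t - a) with 0 by (field; auto).
    rewrite Rabs_R0; auto.
Qed.

Lemma F0_LL m q p n h : LL (F0 m q p n) h
  (IZR (m + 1) - (if Rlt_dec q h then 1 else 0) - INR (clt p n h)).
Proof.
  unfold F0. apply (LL_minus (fun z => IZR (m + 1) * z - hinge q z) (Hs p n)).
  - apply (LL_minus (fun z => IZR (m + 1) * z) (hinge q)); [apply LL_lin|apply LL_hinge].
  - apply LL_Hs.
Qed.

Lemma F0_RL m q p n h : RL (F0 m q p n) h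
  (IZR (m + 1) - (if Rle_dec q h then 1 else 0) - INR (clt p n h + ceq p n h)).
Proof.
  unfold F0. apply (RL_minus (fun z => IZR (m + 1) * z - hinge q z) (Hs p n)).
  - apply (RL_minus (fun z => IZR (m + 1) * z) (hinge q)); [apply RL_lin|apply RL_hinge].
  - apply RL_Hs.
Qed.

Lemma diff_eq q p n h :
  (IZR 0 - (if Rlt_dec q h then 1 else 0) - INR (clt p n h)) -
  (IZR 0 - (if Rle_dec q h then 1 else 0) - INR (clt p n h + ceq p n h)) =
  (if Req_EM_T q h then 1 else 0) + INR (ceq p n h).
Proof.
  rewrite plus_INR. destruct (Rlt_dec q h); destruct (Rle_dec q h); destruct (Req_EM_T q h);
  simpl; lra.
Qed.

Theorem mainTheorem5 (n : nat) (p : nat -> R) (F : R -> R)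
  (hp : forall i, (i < n)%nat -> 0 < p i < 1)
  (hdist : forall i j, (i < n)%nat -> (j < n)%nat -> p i = p j -> i = j)
  (hF : is_trop_series 0 1 F)
  (hFns : forall i, (i < n)%nat -> non_smooth 0 1 F (p i))
  (hFmin : forall G, is_trop_series 0 1 G ->
             (forall i, (i < n)%nat -> non_smooth 0 1 G (p i)) ->
             forall z, 0 <= z <= 1 -> F z <= G z) :
  let q := frac_part (- psum p n) in
  (q = 0 ->
     (forall h, non_smooth 0 1 F h <-> exists i, (i < n)%nat /\ h = p i) /\
     (forall i, (i < n)%nat -> has_mult F (p i) 1%Z)) /\
  (forall j, (j < n)%nat -> q = p j ->
     (forall h, non_smooth 0 1 F h <-> exists i, (i < n)%nat /\ h = p i) /\
     has_mult F (p j) 2%Z /\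
     (forall i, (i < n)%nat -> i <> j -> has_mult F (p i) 1%Z)) /\
  (q <> 0 -> (forall j, (j < n)%nat -> q <> p j) ->
     (forall h, non_smooth 0 1 F h <-> h = q \/ exists i, (i < n)%nat /\ h = p i) /\
     has_mult F q 1%Z /\
     (forall i, (i < n)%nat -> has_mult F (p i) 1%Z)).
Proof.
  intros q.
  set (m := (Int_part (- psum p n) + Z.of_nat n)%Z).
  assert (hm : IZR m + q = INR n - psum p n).
  { unfold m, q, frac_part. rewrite plus_IZR, <- INR_IZR_INZ. ring. }
  assert (hq : 0 <= q < 1) by (unfold q; pose proof (base_fp (- psum p n)); lra).
  destruct hF as [Fnn [F0e [F1e [a ha]]]].
  assert (rep : trop_rep F a) by exact ha.
  pose proof (F0_trop m q p n hp hm hq) as T0.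
  assert (LRh : forall h, 0 < h < 1 ->
     LL (F0 m q p n) h (IZR (m + 1) - (if Rlt_dec q h then 1 else 0) - INR (clt p n h)) /\
     RL (F0 m q p n) h (IZR (m + 1) - (if Rle_dec q h then 1 else 0) - INR (clt p n h + ceq p n h))).
  { intros; split; [apply F0_LL|apply F0_RL]. }
  assert (dif : forall h,
    (IZR (m + 1) - (if Rlt_dec q h then 1 else 0) - INR (clt p n h)) -
    (IZR (m + 1) - (if Rle_dec q h then 1 else 0) - INR (clt p n h + ceq p n h)) =
    (if Req_EM_T q h then 1 else 0) + INR (ceq p n h)).
  { intros h. pose proof (diff_eq q p n h). simpl in H. lra. }
  assert (ns0 : forall i, (i < n)%nat -> non_smooth 0 1 (F0 m q p n) (p i)).
  { intros i hi. pose proof (hp i hi). split; [lra|].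
    destruct (LRh (p i) ltac:(lra)) as [L R].
    apply (LR_nd _ _ _ _ L R). intro e. specialize (dif (p i)).
    rewrite (ceq_1 p n i hdist hi) in dif, e. change (INR 1) with 1 in dif.
    destruct (Req_EM_T q (p i)); lra. }
  assert (le1 : forall z, 0 <= z <= 1 -> F z <= F0 m q p n z) by (apply hFmin; auto).
  assert (le2 : forall z, 0 <= z <= 1 -> F0 m q p n z <= F z).
  { apply (LB F n p m q hp hdist F0e F1e); auto.
    - intros i hi. destruct (hFns i hi) as [hpi nd].
      destruct (kink F a rep F0e F1e (p i) hpi nd) as [u [w [h1 [h2 h3]]]].
      exists u, w. split; auto. split; eapply attain_supp; eauto.
    - intros z hz. destruct (attain F a rep F0e F1e z hz) as [v ev].
      exists v. eapply attain_supp; eauto. }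
  assert (eqF : forall z, 0 <= z <= 1 -> F0 m q p n z = F z).
  { intros z hz. specialize (le1 z hz). specialize (le2 z hz). lra. }
  set (dl := fun h => IZR (m + 1) - (if Rlt_dec q h then 1 else 0) - INR (clt p n h)).
  set (dr := fun h => IZR (m + 1) - (if Rle_dec q h then 1 else 0) - INR (clt p n h + ceq p n h)).
  assert (LRF : forall h, 0 < h < 1 -> LL F h (dl h) /\ RL F h (dr h)).
  { intros h hh. destruct (LRh h hh) as [L R]. split.
    - apply (LL_loc (F0 m q p n)); auto; lra.
    - apply (RL_loc (F0 m q p n)); auto; lra. }
  assert (NS : forall h, non_smooth 0 1 F h <-> (0 < h < 1 /\ (q = h \/ exists i, (i < n)%nat /\ h = p i))).
  { intros h. split.
    - intros [hh nd]. split; auto. apply NNPP. intros nn. apply nd.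
      destruct (LRF h hh) as [L R]. apply (LR_d F h (dl h)); auto.
      replace (dl h) with (dr h); auto.
      specialize (dif h). fold (dl h) (dr h) in dif.
      rewrite ceq_0 in dif by (intros i hi e; apply nn; right; exists i; auto).
      destruct (Req_EM_T q h); [tauto|]. simpl in dif. lra.
    - intros [hh c]. split; auto. destruct (LRF h hh) as [L R].
      apply (LR_nd F h (dl h) (dr h) L R). intro e.
      specialize (dif h). fold (dl h) (dr h) in dif. rewrite e in dif.
      pose proof (pos_INR (ceq p n h)).
      destruct c as [c|[i [hi c]]].
      + destruct (Req_EM_T q h); [lra|tauto].
      + subst h. rewrite (ceq_1 p n i hdist hi) in dif. simpl in dif.
        destruct (Req_EM_T q (p i)); lra. }
  assert (MU : forall h, 0 < h < 1 -> has_mult F h (Z.of_nat ((if Req_EM_T q h then 1 else 0) + ceq p n h))).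
  { intros h hh. destruct (LRF h hh) as [L R].
    exists (dl h), (dr h). split; [apply LL_left; auto|]. split; [apply RL_right; auto|].
    rewrite <- INR_IZR_INZ, plus_INR. unfold dl, dr. rewrite (dif h).
    destruct (Req_EM_T q h); simpl; lra. }
  split; [|split].
  - intros q0. split.
    + intros h. rewrite NS. split.
      * intros [hh [c|c]]; auto. lra.
      * intros [i [hi e]]. subst. pose proof (hp i hi). split; [auto|right; exists i; auto].
    + intros i hi. pose proof (hp i hi).
      pose proof (MU (p i) H) as M. rewrite (ceq_1 p n i hdist hi) in M.
      destruct (Req_EM_T q (p i)); [lra|]. exact M.
  - intros j hj qj. split; [|split].
    + intros h. rewrite NS. split.
      * intros [hh [c|c]]; auto. exists j; split; auto. congruence.
      * intros [i [hi e]]. subst. pose proof (hp i hi). split; [auto|right; exists i; auto].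
    + pose proof (hp j hj).
      pose proof (MU (p j) H) as M. rewrite (ceq_1 p n j hdist hj) in M.
      destruct (Req_EM_T q (p j)); [|tauto]. exact M.
    + intros i hi nij. pose proof (hp i hi).
      pose proof (MU (p i) H) as M. rewrite (ceq_1 p n i hdist hi) in M.
      destruct (Req_EM_T q (p i)); [|exact M].
      exfalso. apply nij. apply hdist; auto. congruence.
  - intros q0 qn. split; [|split].
    + intros h. rewrite NS. split.
      * intros [hh [c|c]]; auto.
      * intros [e|[i [hi e]]].
        -- subst. split; [lra|auto].
        -- subst. pose proof (hp i hi). split; [auto|right; exists i; auto].
    + assert (0 < q < 1) by lra.
      pose proof (MU q H) as M. rewrite ceq_0 in M.
      * destruct (Req_EM_T q q); [exact M|tauto].
      * intros i hi e. apply (qn i hi). auto.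
    + intros i hi. pose proof (hp i hi).
      pose proof (MU (p i) H) as M. rewrite (ceq_1 p n i hdist hi) in M.
      destruct (Req_EM_T q (p i)); [exfalso; apply (qn i hi); auto|exact M].
Qed.
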